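(* Let $\frac12<s<1$, $M\in\mathbb R\setminus\{0\}$ and $c>0$. Then for all $n,m\in\mathbb Z^*$ and $k\in\{2,3\}$, $$|\lambda_n^1-\lambda_m^k|\ge\frac{3|M|}{\frac{2M^2}{\rho_1}+2}>0,$$ and for all $n,m\in\mathbb Z^*$ with $n\neq m$, $$|\lambda_n^1-\lambda_m^1|\ge c\left|\mathrm{sgn}(n)\rho_{|n|}^{1/(2s)}-\mathrm{sgn}(m)\rho_{|m|}^{1/(2s)}\right|>0.$$
   Context: $(-d_x^2)^s$ denotes the fractional Laplacian; $0<\rho_1\le\rho_2\le\cdots\to\infty$ are the eigenvalues (with multiplicity) of its realization on $L^2(-1,1)$ with zero exterior Dirichlet condition. Standing fact used: for $\frac12<s<1$ these eigenvalues are simple. Fix $M\in\mathbb R\setminus\{0\}$. For $n\ge1$, $\mu_n^1$ is the unique real root of $\mu^3+\rho_n\mu-M\rho_n=0$ (it lies strictly between $0$ and $M$), $\mu_n^2=-\frac{\mu_n^1}{2}+i\sqrt{3(\mu_n^1/2)^2+\rho_n}$ and $\mu_n^3=\overline{\mu_n^2}$. For $c\in\mathbb R$, $\mathbb Z^*=\mathbb Z\setminus\{0\}$, $S=\{(n,j):n\in\mathbb Z^*,\ j\in\{1,2,3\}\}$ and $\lambda_n^j=\mu_{|n|}^j+i\,\mathrm{sgn}(n)\,c\,\rho_{|n|}^{1/(2s)}$ for $(n,j)\in S$. *)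

(* Defs.v *)
From Stdlib Require Import Reals Lra Lia ZArith.
Open Scope R_scope.

Definition C := (R * R)%type.
Definition Cmod (z : C) : R := sqrt (fst z ^ 2 + snd z ^ 2).
Definition Cdist (z w : C) : R := Cmod (fst z - fst w, snd z - snd w).

(* mu_n^j for j = 1,2,3, given mu_n^1 = m1 and rho_n = r *)
Definition mu (r m1 : R) (j : nat) : C :=
  match j with
  | 1%nat => (m1, 0)
  | 2%nat => (- m1 / 2, sqrt (3 * (m1 / 2) ^ 2 + r))
  | _ => (- m1 / 2, - sqrt (3 * (m1 / 2) ^ 2 + r))
  end.

Definition lambda (s c : R) (rho mu1 : nat -> R) (n : Z) (j : nat) : C :=
  let a := Z.abs_nat n in
  let z := mu (rho a) (mu1 a) j in
  (fst z, snd z + IZR (Z.sgn n) * c * Rpower (rho a) (1 / (2 * s))).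

(* Main.v *)
Require Import Defs.
From Stdlib Require Import Reals ZArith Lra Lia Psatz.
Open Scope R_scope.

Lemma abs_le_cmod1 (x y : R) : Rabs x <= sqrt (x ^ 2 + y ^ 2).
Proof.
  rewrite <- (sqrt_pow2 (Rabs x)) by apply Rabs_pos.
  apply sqrt_le_1_alt. rewrite pow2_abs.
  pose proof (pow2_ge_0 y). lra.
Qed.

Lemma abs_le_cmod2 (x y : R) : Rabs y <= sqrt (x ^ 2 + y ^ 2).
Proof. rewrite Rplus_comm. apply abs_le_cmod1. Qed.

Lemma rho_mono (rho : nat -> R)
  (Hrho_simple : forall n, (1 <= n)%nat -> rho n < rho (S n)) :
  forall a b, (1 <= a)%nat -> (a < b)%nat -> rho a < rho b.
Proof.
  intros a b Ha Hab. induction b. lia.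
  destruct (Nat.eq_dec a b) as [->|Hne]. apply Hrho_simple; lia.
  specialize (IHb ltac:(lia)). specialize (Hrho_simple b ltac:(lia)). lra.
Qed.

Lemma mu_pos_bound (M mu r r1 : R) (HM : 0 < M) (Hr1 : 0 < r1) (Hr : r1 <= r)
  (H : mu ^ 3 + r * mu - M * r = 0) : mu * (M ^ 2 / r1 + 1) >= M.
Proof.
  assert (Hq : mu * (mu ^ 2 + r) = M * r) by nra.
  assert (Hpos : 0 < mu).
  { destruct (Rle_or_lt mu 0) as [h|h]; [|exact h].
    assert (mu * (mu ^ 2 + r) <= 0). { assert (0 < mu^2 + r) by nra. nra. }
    nra. }
  assert (HmuM : mu < M).
  { destruct (Rle_or_lt M mu) as [h|h]; [|exact h].
    assert (M * (mu^2 + r) <= mu * (mu^2 + r)) by (apply Rmult_le_compat_r; nra).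
    assert (0 < M * mu^2) by (apply Rmult_lt_0_compat; nra). nra. }
  assert (Hm2 : mu ^ 2 < M ^ 2) by nra.
  assert (Hk : mu * (M ^ 2 + r) > M * r) by nra.
  assert (mu * (M^2 / r1 + 1) >= mu * (M^2 / r + 1)).
  { apply Rle_ge. apply Rmult_le_compat_l; [lra|].
    apply Rplus_le_compat_r. unfold Rdiv. apply Rmult_le_compat_l. nra.
    apply Rinv_le_contravar; lra. }
  assert (mu * (M^2 / r + 1) = mu * (M^2 + r) / r) by (field; lra).
  assert (mu * (M^2 + r) / r > M).
  { apply Rlt_gt. apply Rmult_lt_reg_r with r. lra.
    unfold Rdiv. rewrite Rmult_assoc, Rinv_l by lra. lra. }
  lra.
Qed.

Lemma mu_bound (M mu r r1 : R) (HM : M <> 0) (Hr1 : 0 < r1) (Hr : r1 <= r)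
  (H : mu ^ 3 + r * mu - M * r = 0) :
  (0 < M -> mu * (M ^ 2 / r1 + 1) >= M) /\ (M < 0 -> mu * (M ^ 2 / r1 + 1) <= M).
Proof.
  split; intro h. apply (mu_pos_bound M mu r r1); auto.
  assert (A := mu_pos_bound (-M) (-mu) r r1 ltac:(lra) Hr1 Hr ltac:(nra)).
  replace ((-M)^2) with (M^2) in A by ring. lra.
Qed.

Lemma Rpow_lt (x y a : R) : 0 < x -> x < y -> 0 < a -> Rpower x a < Rpower y a.
Proof.
  intros hx hxy ha. unfold Rpower. apply exp_increasing.
  apply Rmult_lt_compat_l; auto. apply ln_increasing; auto.
Qed.

Theorem lemma3p7 (s M c : R) (rho mu1 : nat -> R)
  (Hs : 1 / 2 < s < 1) (HM : M <> 0) (Hc : 0 < c)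
  (Hrho_pos : forall n, (1 <= n)%nat -> 0 < rho n)
  (Hrho_simple : forall n, (1 <= n)%nat -> rho n < rho (S n))
  (Hrho_inf : forall A, exists N, forall n, (N <= n)%nat -> A < rho n)
  (Hmu1 : forall n, (1 <= n)%nat ->
     mu1 n ^ 3 + rho n * mu1 n - M * rho n = 0) :
  (forall (n m : Z) (k : nat), n <> 0%Z -> m <> 0%Z -> (k = 2%nat \/ k = 3%nat) ->
     Cdist (lambda s c rho mu1 n 1) (lambda s c rho mu1 m k)
       >= 3 * Rabs M / (2 * M ^ 2 / rho 1%nat + 2)
     /\ 3 * Rabs M / (2 * M ^ 2 / rho 1%nat + 2) > 0)
  /\
  (forall n m : Z, n <> 0%Z -> m <> 0%Z -> n <> m ->
     Cdist (lambda s c rho mu1 n 1) (lambda s c rho mu1 m 1)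
       >= c * Rabs (IZR (Z.sgn n) * Rpower (rho (Z.abs_nat n)) (1 / (2 * s))
                    - IZR (Z.sgn m) * Rpower (rho (Z.abs_nat m)) (1 / (2 * s)))
     /\ c * Rabs (IZR (Z.sgn n) * Rpower (rho (Z.abs_nat n)) (1 / (2 * s))
                    - IZR (Z.sgn m) * Rpower (rho (Z.abs_nat m)) (1 / (2 * s))) > 0).
Proof.
  assert (Hr1 : 0 < rho 1%nat) by (apply Hrho_pos; lia).
  assert (Hge1 : forall a, (1 <= a)%nat -> rho 1%nat <= rho a).
  { intros a Ha. destruct (Nat.eq_dec a 1) as [->|]. lra.
    left. apply rho_mono; auto; lia. }
  assert (HD : 0 < M ^ 2 / rho 1%nat + 1).
  { assert (0 <= M^2 / rho 1%nat) by (apply Rmult_le_pos; [nra|left; apply Rinv_0_lt_compat; lra]). lra. }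
  assert (Habs : 0 < Rabs M) by (apply Rabs_pos_lt; auto).
  assert (Htgt : 3 * Rabs M / (2 * M ^ 2 / rho 1%nat + 2)
                 = 3/2 * (Rabs M / (M ^ 2 / rho 1%nat + 1))) by (field; repeat split; nra).
  split.
  - intros n m k Hn Hm Hk.
    assert (Ha : (1 <= Z.abs_nat n)%nat) by lia.
    assert (Hb : (1 <= Z.abs_nat m)%nat) by lia.
    set (a := Z.abs_nat n) in *. set (b := Z.abs_nat m) in *.
    destruct (mu_bound M (mu1 a) (rho a) (rho 1%nat) HM Hr1 (Hge1 a Ha) (Hmu1 a Ha)) as [A1 A2].
    destruct (mu_bound M (mu1 b) (rho b) (rho 1%nat) HM Hr1 (Hge1 b Hb) (Hmu1 b Hb)) as [B1 B2].
    set (D := M ^ 2 / rho 1%nat + 1) in *.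
    rewrite Htgt.
    assert (Hre : Rabs (mu1 a - - mu1 b / 2) >= 3/2 * (Rabs M / D)).
    { unfold Rdiv at 2. 
      destruct (Rlt_or_le 0 M) as [hM|hM].
      + specialize (A1 hM). specialize (B1 hM).
        assert (mu1 a >= M * / D). { apply Rle_ge. apply Rmult_le_reg_r with D; auto.
          rewrite Rmult_assoc, Rinv_l by lra. lra. }
        assert (mu1 b >= M * / D). { apply Rle_ge. apply Rmult_le_reg_r with D; auto.
          rewrite Rmult_assoc, Rinv_l by lra. lra. }
        assert (0 < M * / D) by (apply Rmult_lt_0_compat; [lra|apply Rinv_0_lt_compat; lra]).
        rewrite Rabs_right by lra. rewrite Rabs_right by lra.
        lra.
      + assert (hM' : M < 0) by lra. specialize (A2 hM'). specialize (B2 hM').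
        assert (M * / D < 0) by (apply Rmult_neg_pos; [lra|apply Rinv_0_lt_compat; lra]).
        assert (mu1 a <= M * / D). { apply Rmult_le_reg_r with D; auto.
          rewrite Rmult_assoc, Rinv_l by lra. lra. }
        assert (mu1 b <= M * / D). { apply Rmult_le_reg_r with D; auto.
          rewrite Rmult_assoc, Rinv_l by lra. lra. }
        rewrite Rabs_left by lra.
        rewrite Rabs_left. lra. lra. }
    assert (0 < Rabs M / D) by (apply Rdiv_lt_0_compat; lra).
    split; [|lra].
    unfold Cdist, Cmod, lambda.
    destruct Hk as [-> | ->]; simpl fst; simpl snd; fold a b.
    all: match goal with |- sqrt (?x ^ 2 + ?y ^ 2) >= _ =>
           pose proof (abs_le_cmod1 x y) end; lra.
  - intros n m Hn Hm Hnm.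
    unfold Cdist, Cmod, lambda. simpl fst; simpl snd.
    set (al := 1 / (2 * s)).
    assert (Hal : 0 < al) by (unfold al; apply Rdiv_lt_0_compat; lra).
    match goal with |- sqrt (?x ^ 2 + ?y ^ 2) >= _ /\ _ =>
           pose proof (abs_le_cmod2 x y) end.
    replace (0 + IZR (Z.sgn n) * c * Rpower (rho (Z.abs_nat n)) al -
             (0 + IZR (Z.sgn m) * c * Rpower (rho (Z.abs_nat m)) al))
      with (c * (IZR (Z.sgn n) * Rpower (rho (Z.abs_nat n)) al -
                 IZR (Z.sgn m) * Rpower (rho (Z.abs_nat m)) al)) in * by ring.
    rewrite Rabs_mult, (Rabs_right c) in H by lra.
    split; [lra|].
    apply Rmult_gt_0_compat; [lra|]. apply Rabs_pos_lt.
    assert (Ha : (1 <= Z.abs_nat n)%nat) by lia.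
    assert (Hb : (1 <= Z.abs_nat m)%nat) by lia.
    assert (Pa : 0 < Rpower (rho (Z.abs_nat n)) al) by apply exp_pos.
    assert (Pb : 0 < Rpower (rho (Z.abs_nat m)) al) by apply exp_pos.
    assert (Hinj : Z.abs_nat n <> Z.abs_nat m -> Rpower (rho (Z.abs_nat n)) al <> Rpower (rho (Z.abs_nat m)) al).
    { intro hne. destruct (Nat.lt_gt_cases (Z.abs_nat n) (Z.abs_nat m)) as [[h|h] _].
      exact hne.
      - apply Rlt_not_eq. apply Rpow_lt; auto. apply rho_mono; auto.
      - apply Rgt_not_eq. apply Rpow_lt; auto. apply rho_mono; auto. }
    destruct n as [|p|p]; [lia| |]; destruct m as [|q|q]; try lia; simpl Z.sgn;
      [ assert (Z.abs_nat (Z.pos p) <> Z.abs_nat (Z.pos q)) by lia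
      | | | assert (Z.abs_nat (Z.neg p) <> Z.abs_nat (Z.neg q)) by lia ];
      try (specialize (Hinj H0)); simpl IZR; lra.
Qed.
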